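(* Let $\lambda\in ba(\mathcal A)$ and let $\mathscr M\subset ba(\mathcal A)_+$ be convex and weak$^*$ compact. Then $\lambda\perp\mu$ for every $\mu\in\mathscr M$ if and only if $\lambda\perp_u\mathscr M$, i.e. for every $\varepsilon>0$ there is $A\in\mathcal A$ with $\sup_{\mu\in\mathscr M}|\mu|(A)+|\lambda|(A^c)<\varepsilon$.
   Context: $\mathcal A$ is an algebra of subsets of a set $\Omega$, $ba(\mathcal A)$ the space of bounded finitely additive real set functions on $\mathcal A$, $ba(\mathcal A)_+$ its nonnegative elements, $|\mu|$ total variation. $\mu\perp\lambda$ means: for every $\varepsilon>0$ there is $A\in\mathcal A$ with $|\mu|(A)+|\lambda|(A^c)<\varepsilon$. The weak$^*$ topology on $ba(\mathcal A)$ is that of pointwise convergence on $\mathcal A$-simple functions, $\mu\mapsto\mu(f)=\int f\,d\mu$ (i.e. $ba(\mathcal A)$ viewed as the dual of the space of uniform limits of simple functions). *)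

(* Defs.v *)
From Stdlib Require Import Reals Lra List Classical ClassicalEpsilon.
Import ListNotations.
Open Scope R_scope.

Section BA.
Context {Omega : Type}.

Definition compl (B : Omega -> Prop) : Omega -> Prop := fun x => ~ B x.
Definition disj (B C : Omega -> Prop) : Prop := forall x, ~ (B x /\ C x).

Definition is_algebra (A : (Omega -> Prop) -> Prop) : Prop :=
  A (fun _ => False) /\
  (forall B, A B -> A (compl B)) /\
  (forall B C, A B -> A C -> A (fun x => B x \/ C x)).

(** Supremum of a set of reals (classical); 0 when there is no least upper
    bound (e.g. the empty set). *)
Definition Rsup (S : R -> Prop) : R :=
  epsilon (inhabits 0)
    (fun v => is_lub S v \/ (~ (exists w, is_lub S w) /\ v = 0)).

(** Elements of ba(A): bounded finitely additive real set functions on A,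
    represented as functions on all subsets vanishing outside A. *)
Definition is_ba (A : (Omega -> Prop) -> Prop) (mu : (Omega -> Prop) -> R) : Prop :=
  (forall B, ~ A B -> mu B = 0) /\
  (forall B C, A B -> A C -> disj B C ->
       mu (fun x => B x \/ C x) = mu B + mu C) /\
  (exists K, forall B, A B -> Rabs (mu B) <= K).

Definition is_ba_pos (A : (Omega -> Prop) -> Prop) (mu : (Omega -> Prop) -> R) : Prop :=
  is_ba A mu /\ forall B, A B -> 0 <= mu B.

Definition is_A_partition (A : (Omega -> Prop) -> Prop)
    (B : Omega -> Prop) (l : list (Omega -> Prop)) : Prop :=
  (forall C, In C l -> A C) /\
  ForallOrdPairs disj l /\
  (forall x, B x <-> exists C, In C l /\ C x).

Definition tv (A : (Omega -> Prop) -> Prop) (mu : (Omega -> Prop) -> R)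
    (B : Omega -> Prop) : R :=
  Rsup (fun r => exists l, is_A_partition A B l /\
          r = fold_right (fun C s => Rabs (mu C) + s) 0 l).

Definition perp (A : (Omega -> Prop) -> Prop) (mu lam : (Omega -> Prop) -> R) : Prop :=
  forall eps, 0 < eps -> exists B, A B /\ tv A mu B + tv A lam (compl B) < eps.

Definition perp_u (A : (Omega -> Prop) -> Prop) (lam : (Omega -> Prop) -> R)
    (M : ((Omega -> Prop) -> R) -> Prop) : Prop :=
  forall eps, 0 < eps -> exists B, A B /\
     Rsup (fun r => exists mu, M mu /\ r = tv A mu B) + tv A lam (compl B) < eps.

(** A-simple functions, given as finite combinations sum c_i 1_{B_i}, B_i in A,
    and their integrals mu(f) = sum c_i mu(B_i). *)
Definition is_simple (A : (Omega -> Prop) -> Prop) (f : list (R * (Omega -> Prop))) : Prop :=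
  forall p, In p f -> A (snd p).
Definition integral (mu : (Omega -> Prop) -> R) (f : list (R * (Omega -> Prop))) : R :=
  fold_right (fun p s => fst p * mu (snd p) + s) 0 f.

Definition weak_open (A : (Omega -> Prop) -> Prop)
    (U : ((Omega -> Prop) -> R) -> Prop) : Prop :=
  forall mu, is_ba A mu -> U mu ->
    exists (fs : list (list (R * (Omega -> Prop)))) (delta : R),
      0 < delta /\ (forall f, In f fs -> is_simple A f) /\
      forall nu, is_ba A nu ->
        (forall f, In f fs -> Rabs (integral nu f - integral mu f) < delta) -> U nu.

Definition weak_compact (A : (Omega -> Prop) -> Prop)
    (M : ((Omega -> Prop) -> R) -> Prop) : Prop :=
  (forall mu, M mu -> is_ba A mu) /\
  forall (I : Type) (U : I -> ((Omega -> Prop) -> R) -> Prop),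
    (forall i, weak_open A (U i)) ->
    (forall mu, M mu -> exists i, U i mu) ->
    exists (l : list I), forall mu, M mu -> exists i, In i l /\ U i mu.

Definition convex (M : ((Omega -> Prop) -> R) -> Prop) : Prop :=
  forall mu nu t, M mu -> M nu -> 0 <= t <= 1 ->
    M (fun B => t * mu B + (1 - t) * nu B).

End BA.

(* Main.v *)
Require Import Defs.
From Stdlib Require Import Reals List Lra Psatz Classical ClassicalEpsilon FunctionalExtensionality PropExtensionality.
Import ListNotations.
Open Scope R_scope.

Lemma Rsup_cases (S : R -> Prop) :
  is_lub S (Rsup S) \/ (~ (exists w, is_lub S w) /\ Rsup S = 0).
Proof.
  unfold Rsup. apply epsilon_spec.
  destruct (classic (exists w, is_lub S w)) as [[w Hw]|Hn].
  - exists w; left; exact Hw.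
  - exists 0; right; auto.
Qed.

Lemma Rsup_lub (S : R -> Prop) : (exists x, S x) -> (exists b, is_upper_bound S b) ->
  is_lub S (Rsup S).
Proof.
  intros He Hb. destruct (Rsup_cases S) as [H|[Hn _]]; auto.
  exfalso; apply Hn. destruct (completeness S Hb He) as [m Hm]; eauto.
Qed.

Lemma Rsup_ge (S : R -> Prop) x : S x -> (exists b, is_upper_bound S b) -> x <= Rsup S.
Proof. intros Hx Hb. destruct (Rsup_lub S (ex_intro _ x Hx) Hb) as [H1 _]. apply H1, Hx. Qed.

Lemma Rsup_le (S : R -> Prop) b : (forall x, S x -> x <= b) -> 0 <= b -> Rsup S <= b.
Proof.
  intros H Hb. destruct (Rsup_cases S) as [[_ H2]|[_ ->]]; [|exact Hb].
  apply H2. intros x Hx; apply H, Hx.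
Qed.

Section Sets.
Variable Omega : Type.
Implicit Types B C D E X Y : Omega -> Prop.

Lemma sext B C : (forall x, B x <-> C x) -> B = C.
Proof. intros H; apply functional_extensionality; intros x; apply propositional_extensionality; apply H. Qed.

Definition empty : Omega -> Prop := fun _ => False.
Definition full : Omega -> Prop := fun _ => True.
Definition inter B C : Omega -> Prop := fun x => B x /\ C x.
Definition union B C : Omega -> Prop := fun x => B x \/ C x.

Lemma inter_full C : inter full C = C.
Proof. apply sext; unfold inter, full; tauto. Qed.

Variable A : (Omega -> Prop) -> Prop.
Hypothesis HA : is_algebra A.

Lemma A_empty : A empty. Proof. apply HA. Qed.
Lemma A_compl B : A B -> A (compl B). Proof. apply HA. Qed.
Lemma A_union B C : A B -> A C -> A (union B C). Proof. apply HA. Qed.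
Lemma A_full : A full.
Proof.
  replace full with (compl empty). apply A_compl, A_empty.
  apply sext; unfold compl, empty, full; tauto.
Qed.
Lemma A_inter B C : A B -> A C -> A (inter B C).
Proof.
  intros HB HC. replace (inter B C) with (compl (union (compl B) (compl C))).
  - apply A_compl, A_union; apply A_compl; auto.
  - apply sext; intros x; unfold compl, union, inter; split.
    + intros H; destruct (classic (B x)); destruct (classic (C x)); tauto.
    + tauto.
Qed.

Section BaMu.
Variable mu : (Omega -> Prop) -> R.
Hypothesis Hmu : is_ba A mu.

Lemma ba_add B C : A B -> A C -> disj B C -> mu (union B C) = mu B + mu C.
Proof. intros; apply Hmu; auto. Qed.

Lemma ba_empty : mu empty = 0.
Proof.
  assert (H := ba_add empty empty A_empty A_empty (fun x h => proj1 h)).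
  replace (union empty empty) with empty in H. lra.
  apply sext; unfold union, empty; tauto.
Qed.
End BaMu.

Definition sumv (mu : (Omega -> Prop) -> R) (l : list (Omega -> Prop)) :=
  fold_right (fun C s => mu C + s) 0 l.
Definition psum (mu : (Omega -> Prop) -> R) (l : list (Omega -> Prop)) :=
  fold_right (fun C s => Rabs (mu C) + s) 0 l.
Definition ulist (l : list (Omega -> Prop)) : Omega -> Prop := fun x => exists C, In C l /\ C x.

Lemma part_sum : forall l X, is_A_partition A X l ->
  A X /\ forall mu, is_ba A mu -> mu X = sumv mu l.
Proof.
  induction l as [|C l IH]; intros X [Hf [Hd Hc]].
  - replace X with empty. split; [apply A_empty|]. intros mu Hmu; simpl; apply (ba_empty mu Hmu).
    apply sext; intros x; rewrite Hc; unfold empty; split; [tauto|]. intros [C [[] _]].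
  - inversion Hd; subst.
    destruct (IH (ulist l)) as [HA' Hs].
    { split; [intros D HD; apply Hf; right; auto|split; [auto|]]. unfold ulist; tauto. }
    assert (HX : X = union C (ulist l)).
    { apply sext; intros x; rewrite Hc; unfold union, ulist; split.
      - intros [D [[<-|HD] Dx]]; [left; auto|right; eauto].
      - intros [Cx|[D [HD Dx]]]; [exists C; split; [left|]; auto|exists D; split; [right|]; auto]. }
    assert (HAC : A C) by (apply Hf; left; auto).
    assert (Hdj : disj C (ulist l)).
    { intros x [Cx [D [HD Dx]]]. rewrite Forall_forall in H1. apply (H1 D HD x); auto. }
    subst X. split; [apply A_union; auto|].
    intros mu Hmu. rewrite (ba_add mu Hmu); auto. simpl. rewrite (Hs mu Hmu). reflexivity.
Qed.

Lemma part_single X : A X -> is_A_partition A X [X].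
Proof.
  intros HX. split; [intros C [<-|[]]; auto|split].
  - constructor; constructor.
  - intros x; split; [intros; exists X; split; [left|]; auto|intros [C [[<-|[]] H]]; auto].
Qed.

Lemma part_sub X l C : is_A_partition A X l -> In C l -> forall x, C x -> X x.
Proof. intros [_ [_ Hc]] HC x Cx. apply Hc; eauto. Qed.

Lemma FOP_app (R : (Omega -> Prop) -> (Omega -> Prop) -> Prop) l1 l2 :
  ForallOrdPairs R l1 -> ForallOrdPairs R l2 ->
  (forall a b, In a l1 -> In b l2 -> R a b) -> ForallOrdPairs R (l1 ++ l2).
Proof.
  induction l1 as [|a l1 IH]; intros H1 H2 H; simpl; auto.
  inversion H1; subst. constructor.
  - apply Forall_app; split; auto. rewrite Forall_forall; intros b Hb; apply H; simpl; auto.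
  - apply IH; auto. intros; apply H; simpl; auto.
Qed.

Lemma FOP_map (R : (Omega -> Prop) -> (Omega -> Prop) -> Prop) f l :
  ForallOrdPairs R l -> (forall a b, R a b -> R (f a) (f b)) -> ForallOrdPairs R (map f l).
Proof.
  induction l as [|a l IH]; intros H1 H; simpl; constructor.
  - inversion H1; subst. apply Forall_map. eapply Forall_impl; [|eassumption]. intros; apply H; auto.
  - inversion H1; subst; auto.
Qed.

Definition Tset (mu : (Omega -> Prop) -> R) X : R -> Prop :=
  fun r => exists l, is_A_partition A X l /\ r = psum mu l.

Lemma tv_eq mu X : tv A mu X = Rsup (Tset mu X).
Proof. reflexivity. Qed.

Section Lam.
Variable lam : (Omega -> Prop) -> R.
Hypothesis Hlam : is_ba A lam.

Lemma split_signs : forall l, Forall A l -> ForallOrdPairs disj l ->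
  exists l1 l2, Forall A l1 /\ ForallOrdPairs disj l1 /\ Forall A l2 /\ ForallOrdPairs disj l2 /\
   (forall D, In D l1 -> In D l) /\ (forall D, In D l2 -> In D l) /\
   psum lam l = sumv lam l1 - sumv lam l2.
Proof.
  induction l as [|C l IH]; intros HF Hd.
  - exists [], []. repeat split; try constructor; try (intros ? []). simpl; ring.
  - inversion HF; inversion Hd; subst.
    destruct (IH H2 H6) as [l1 [l2 [F1 [D1 [F2 [D2 [I1 [I2 E]]]]]]]].
    rewrite Forall_forall in H5.
    destruct (Rle_dec 0 (lam C)) as [Hp|Hn].
    + exists (C :: l1), l2. repeat split; auto.
      * constructor; auto. rewrite Forall_forall; intros; apply H5; auto.
      * intros D [<-|HD]; [left|right]; auto.
      * intros D HD; right; auto.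
      * simpl. rewrite Rabs_right by lra. simpl in E. rewrite E. ring.
    + exists l1, (C :: l2). repeat split; auto.
      * constructor; auto. rewrite Forall_forall; intros; apply H5; auto.
      * intros D HD; right; auto.
      * intros D [<-|HD]; [left|right]; auto.
      * simpl. rewrite Rabs_left by lra. simpl in E. rewrite E. ring.
Qed.

Lemma ulist_part l : Forall A l -> ForallOrdPairs disj l -> is_A_partition A (ulist l) l.
Proof. intros HF Hd. split; [rewrite <- Forall_forall; auto|split; auto]. unfold ulist; tauto. Qed.

Lemma psum_bound : exists Kb, forall X l, is_A_partition A X l -> psum lam l <= Kb.
Proof.
  destruct Hlam as [_ [_ [K HK]]]. exists (2 * K). intros X l [Hf [Hd _]].
  destruct (split_signs l) as [l1 [l2 [F1 [D1 [F2 [D2 [_ [_ E]]]]]]]]; auto.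
  { rewrite Forall_forall; auto. }
  destruct (part_sum l1 _ (ulist_part l1 F1 D1)) as [U1 S1].
  destruct (part_sum l2 _ (ulist_part l2 F2 D2)) as [U2 S2].
  rewrite E.
  specialize (HK _ U1) as K1. specialize (HK _ U2) as K2.
  pose proof (Rle_abs (sumv lam l1)). pose proof (Rle_abs (- sumv lam l2)). rewrite Rabs_Ropp in H0.
  rewrite (S1 lam Hlam) in K1. rewrite (S2 lam Hlam) in K2. lra.
Qed.

Lemma tv_lub X : A X -> is_lub (Tset lam X) (tv A lam X).
Proof.
  intros HX. rewrite tv_eq. apply Rsup_lub.
  - exists (psum lam [X]). exists [X]; split; auto. apply part_single; auto.
  - destruct psum_bound as [Kb HKb]. exists Kb. intros r [l [Hl ->]]. eauto.
Qed.

Lemma psum_nonneg l : 0 <= psum lam l.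
Proof. induction l; simpl; [lra|]. pose proof (Rabs_pos (lam a)); lra. Qed.

Lemma tv_nonneg X : A X -> 0 <= tv A lam X.
Proof.
  intros HX. destruct (tv_lub X HX) as [H1 _].
  apply Rle_trans with (psum lam [X]); [apply psum_nonneg|]. apply H1. exists [X]; split; auto.
  apply part_single; auto.
Qed.

Lemma psum_app l1 l2 : psum lam (l1 ++ l2) = psum lam l1 + psum lam l2.
Proof. induction l1; simpl; [ring|]. rewrite IHl1; ring. Qed.

Lemma tv_super X Y : A X -> A Y -> disj X Y -> tv A lam X + tv A lam Y <= tv A lam (union X Y).
Proof.
  intros HX HY Hd. pose proof (tv_lub _ (A_union _ _ HX HY)) as [U1 _].
  assert (Hr : forall r1 r2, Tset lam X r1 -> Tset lam Y r2 -> r1 + r2 <= tv A lam (union X Y)).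
  { intros r1 r2 [l1 [P1 ->]] [l2 [P2 ->]]. rewrite <- psum_app. apply U1. exists (l1 ++ l2); split; auto.
    destruct P1 as [F1 [D1 C1]], P2 as [F2 [D2 C2]]. split; [|split].
    - intros C HC; apply in_app_or in HC; destruct HC; auto.
    - apply FOP_app; auto. intros a b Ha Hb x [ax bx].
      apply (Hd x); split; [apply C1|apply C2]; eauto.
    - intros x; unfold union; rewrite C1, C2. split.
      + intros [[C [HC Cx]]|[C [HC Cx]]]; exists C; split; auto; apply in_or_app; auto.
      + intros [C [HC Cx]]; apply in_app_or in HC; destruct HC; [left|right]; eauto. }
  assert (H2 : forall r2, Tset lam Y r2 -> tv A lam X <= tv A lam (union X Y) - r2).
  { intros r2 Hr2. apply (tv_lub X HX). intros r1 Hr1. specialize (Hr r1 r2 Hr1 Hr2); lra. }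
  assert (tv A lam Y <= tv A lam (union X Y) - tv A lam X).
  { apply (tv_lub Y HY). intros r2 Hr2. specialize (H2 r2 Hr2). lra. }
  lra.
Qed.

Lemma tv_sub X Y : A X -> A Y -> disj X Y -> tv A lam (union X Y) <= tv A lam X + tv A lam Y.
Proof.
  intros HX HY Hd. apply (tv_lub _ (A_union _ _ HX HY)). intros r [l [Pl ->]].
  assert (Hmp : forall Z, A Z -> (forall x, Z x -> union X Y x) -> is_A_partition A (union X Y) l ->
            is_A_partition A Z (map (inter Z) l)).
  { intros Z HZ HZs [F [D Cv]]. split; [|split].
    - intros C' HC'. apply in_map_iff in HC'. destruct HC' as [C [<- HC]]. apply A_inter; auto.
    - apply FOP_map; auto. intros a b Hab x [[_ ax] [_ bx]]. apply (Hab x); auto.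
    - intros x; split.
      + intros Zx. destruct (proj1 (Cv x) (HZs x Zx)) as [C [HC Cx]]. exists (inter Z C); split.
        * apply in_map; auto.
        * split; auto.
      + intros [C' [HC' C'x]]. apply in_map_iff in HC'. destruct HC' as [C [<- _]]. apply C'x. }
  assert (PX := Hmp X HX (fun x h => or_introl h) Pl).
  assert (PY := Hmp Y HY (fun x h => or_intror h) Pl).
  assert (Hle : psum lam l <= psum lam (map (inter X) l) + psum lam (map (inter Y) l)).
  { destruct Pl as [F [_ Cv]]. clear PX PY Hmp.
    assert (Hs : forall C, In C l -> forall x, C x -> union X Y x) by (intros C HC x Cx; apply Cv; eauto).
    clear Cv. induction l as [|C l IH]; simpl; [lra|].
    assert (HC : A C) by (apply F; left; auto).
    assert (E : C = union (inter X C) (inter Y C)).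
    { apply sext; intros x; unfold union, inter; split; [|tauto].
      intros Cx; destruct (Hs C (or_introl eq_refl) x Cx); tauto. }
    assert (lam C = lam (inter X C) + lam (inter Y C)).
    { rewrite E at 1. apply ba_add; auto; try (apply A_inter; auto).
      intros x [[Xx _] [Yx _]]; apply (Hd x); auto. }
    pose proof (Rabs_triang (lam (inter X C)) (lam (inter Y C))).
    rewrite <- H in H0.
    assert (psum lam l <= psum lam (map (inter X) l) + psum lam (map (inter Y) l)).
    { apply IH; [intros; apply F; right; auto|intros; eapply Hs; [right|]; eauto]. }
    lra. }
  destruct (tv_lub X HX) as [UX _]. destruct (tv_lub Y HY) as [UY _].
  assert (psum lam (map (inter X) l) <= tv A lam X) by (apply UX; eexists; split; eauto).
  assert (psum lam (map (inter Y) l) <= tv A lam Y) by (apply UY; eexists; split; eauto).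
  lra.
Qed.
End Lam.

Lemma sumv_pos mu l : (forall C, In C l -> 0 <= mu C) -> psum mu l = sumv mu l.
Proof.
  induction l; intros H; simpl; auto. rewrite Rabs_right by (apply Rle_ge, H; left; auto).
  rewrite IHl; auto. intros; apply H; right; auto.
Qed.

Lemma tv_pos mu X : is_ba_pos A mu -> A X -> tv A mu X = mu X.
Proof.
  intros [Hb Hp] HX.
  assert (L : is_lub (Tset mu X) (mu X)).
  { split.
    - intros r [l [Pl ->]]. rewrite sumv_pos. right. symmetry; apply (part_sum l X Pl); auto.
      intros C HC; apply Hp; destruct Pl as [F _]; auto.
    - intros b Hb'. apply Hb'. exists [X]; split; [apply part_single; auto|]. simpl.
      rewrite Rabs_right; [ring|apply Rle_ge, Hp; auto]. }
  rewrite tv_eq. destruct (Rsup_cases (Tset mu X)) as [H|[Hn _]].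
  - apply Rle_antisym; [apply H, L|apply L, H].
  - exfalso; apply Hn; eauto.
Qed.

End Sets.

Section Claim.
Variable Omega : Type.
Variable A : (Omega -> Prop) -> Prop.
Hypothesis HA : is_algebra A.
Variable nu : (Omega -> Prop) -> R.
Hypothesis Hnn : forall X, A X -> 0 <= nu X.
Hypothesis Hsub : forall X Y, A X -> A Y -> disj X Y -> nu (union Omega X Y) <= nu X + nu Y.
Hypothesis Hsup : forall X Y, A X -> A Y -> disj X Y -> nu X + nu Y <= nu (union Omega X Y).

Lemma nu_empty : nu (empty Omega) = 0.
Proof.
  assert (H := Hsup _ _ (A_empty _ _ HA) (A_empty _ _ HA) (fun x h => proj1 h)).
  replace (union Omega (empty Omega) (empty Omega)) with (empty Omega) in H.
  - pose proof (Hnn _ (A_empty _ _ HA)). lra.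
  - apply sext; unfold union, empty; tauto.
Qed.

Lemma nu_mono X Y : A X -> A Y -> (forall x, X x -> Y x) -> nu X <= nu Y.
Proof.
  intros HX HY Hs.
  assert (E : Y = union Omega X (inter Omega Y (compl X))).
  { apply sext; intros x; unfold union, inter, compl; split.
    - intros Yx; destruct (classic (X x)); auto.
    - intros [Xx|[Yx _]]; auto. }
  assert (A (inter Omega Y (compl X))) by (apply A_inter; auto; apply A_compl; auto).
  rewrite E. pose proof (Hsup X _ HX H (fun x h => proj2 (proj2 h) (proj1 h))).
  pose proof (Hnn _ H). lra.
Qed.

Fixpoint Sth (th : R) (l : list (R * (Omega -> Prop))) : Omega -> Prop :=
  match l with
  | [] => fun _ => th <= 0
  | pB :: l' => fun x => (snd pB x /\ Sth (th - fst pB) l' x) \/ (~ snd pB x /\ Sth th l' x)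
  end.

Definition wsumE (E : Omega -> Prop) (l : list (R * (Omega -> Prop))) :=
  fold_right (fun pB s => fst pB * nu (inter Omega E (snd pB)) + s) 0 l.

Lemma Sth_A : forall l, Forall (fun pB => A (snd pB)) l -> forall th, A (Sth th l).
Proof.
  induction l as [|[p B] l IH]; intros HF th; simpl.
  - destruct (Rle_dec th 0).
    + replace (fun _ : Omega => th <= 0) with (full Omega); [apply A_full; auto|].
      apply sext; unfold full; intuition.
    + replace (fun _ : Omega => th <= 0) with (empty Omega); [apply A_empty; auto|].
      apply sext; unfold empty; intuition.
  - inversion HF; subst. simpl in H1.
    exact (A_union _ _ HA _ _ (A_inter _ _ HA _ _ H1 (IH H2 _))
                  (A_inter _ _ HA _ _ (A_compl _ _ HA _ H1) (IH H2 _))).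
Qed.

Lemma wsumE_nonneg E l : A E -> Forall (fun pB => 0 <= fst pB /\ A (snd pB)) l -> 0 <= wsumE E l.
Proof.
  intros HE; induction l as [|[p B] l IH]; intros HF; simpl; [lra|].
  inversion HF; subst. destruct H1 as [Hp HB]. simpl in *.
  pose proof (Hnn _ (A_inter _ _ HA _ _ HE HB)). specialize (IH H2). nra.
Qed.

Lemma wsumE_split E B l : A E -> A B -> Forall (fun pB => 0 <= fst pB /\ A (snd pB)) l ->
  wsumE (inter Omega E B) l + wsumE (inter Omega E (compl B)) l <= wsumE E l.
Proof.
  intros HE HB; induction l as [|[p C] l IH]; intros HF; simpl; [lra|].
  inversion HF; subst. destruct H1 as [Hp HC]. simpl in *. specialize (IH H2).
  assert (Eq : inter Omega E C = union Omega (inter Omega (inter Omega E B) C) (inter Omega (inter Omega E (compl B)) C)).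
  { apply sext; intros x; unfold union, inter, compl; split; [|tauto].
    intros [Ex Cx]; destruct (classic (B x)); tauto. }
  assert (H := Hsup (inter Omega (inter Omega E B) C) (inter Omega (inter Omega E (compl B)) C)).
  rewrite <- Eq in H.
  assert (nu (inter Omega (inter Omega E B) C) + nu (inter Omega (inter Omega E (compl B)) C) <= nu (inter Omega E C)).
  { apply H.
    - apply A_inter; auto; apply A_inter; auto.
    - apply A_inter; auto; apply A_inter; auto; apply A_compl; auto.
    - intros x [[[_ Bx] _] [[_ nBx] _]]; auto. }
  nra.
Qed.

Lemma claim : forall l, Forall (fun pB => 0 <= fst pB /\ A (snd pB)) l ->
  forall th E, 0 < th -> A E -> th * nu (inter Omega E (Sth th l)) <= wsumE E l.
Proof.
  induction l as [|[p B] l IH]; intros HF th E Hth HE; simpl.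
  - replace (inter Omega E (fun _ : Omega => th <= 0)) with (empty Omega).
    + rewrite nu_empty. lra.
    + apply sext; unfold inter, empty; intros x; split; [tauto|lra].
  - inversion HF; subst. destruct H1 as [Hp HB]. simpl in *.
    assert (HSA : forall t, A (Sth t l)) by (apply Sth_A; eapply Forall_impl; [|eassumption]; simpl; tauto).
    set (E1 := inter Omega E B). set (E2 := inter Omega E (compl B)).
    assert (HE1 : A E1) by (apply A_inter; auto).
    assert (HE2 : A E2) by (apply A_inter; auto; apply A_compl; auto).
    set (X1 := inter Omega E1 (Sth (th - p) l)). set (X2 := inter Omega E2 (Sth th l)).
    assert (HX1 : A X1) by (apply A_inter; auto).
    assert (HX2 : A X2) by (apply A_inter; auto).
    assert (Eq : inter Omega E (fun x => (B x /\ Sth (th - p) l x) \/ (~ B x /\ Sth th l x)) = union Omega X1 X2).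
    { apply sext; intros x; unfold X1, X2, E1, E2, union, inter, compl; tauto. }
    rewrite Eq.
    assert (Hs := Hsub X1 X2 HX1 HX2 ltac:(intros x [[[_ Bx] _] [[_ nBx] _]]; auto)).
    assert (I2 := IH H2 th E2 Hth HE2).
    assert (Sp := wsumE_split E B l HE HB H2).
    assert (M1 : nu X1 <= nu E1) by (apply nu_mono; auto; intros x [h _]; auto).
    assert (N1 := Hnn _ HX1). assert (N2 := Hnn _ HX2).
    assert (W1 := wsumE_nonneg E1 l HE1 H2).
    assert (T1 : th * nu (union Omega X1 X2) <= th * nu X1 + th * nu X2)
      by (rewrite <- Rmult_plus_distr_l; apply Rmult_le_compat_l; lra).
    assert (T2 : p * nu X1 <= p * nu E1) by (apply Rmult_le_compat_l; lra).
    destruct (Rlt_dec 0 (th - p)) as [Hpos|Hneg].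
    + assert (I1 := IH H2 (th - p) E1 Hpos HE1).
      assert (th * nu X1 = (th - p) * nu X1 + p * nu X1) by ring.
      unfold X1, X2, E1, E2 in *. lra.
    + assert (th * nu X1 <= p * nu X1) by (apply Rmult_le_compat_r; lra).
      unfold X1, X2, E1, E2 in *. lra.
Qed.

Definition sumw {T} (w : list (R * T)) := fold_right (fun p s => fst p + s) 0 w.
Definition mapc (l : list (R * (Omega -> Prop))) := map (fun pB => (fst pB, compl (snd pB))) l.

Lemma Sth_compl : forall l th x, ~ Sth th l x -> Sth (sumw l - th) (mapc l) x.
Proof.
  induction l as [|[p B] l IH]; intros th x Hn; simpl in *.
  - lra.
  - unfold compl. destruct (classic (B x)) as [Bx|nBx].
    + right. split; [tauto|]. replace (p + sumw l - th) with (sumw l - (th - p)) by ring.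
      apply IH. tauto.
    + left. split; [auto|]. replace (p + sumw l - th - p) with (sumw l - th) by ring.
      apply IH. tauto.
Qed.
End Claim.

Section Minimax.
Variable X : Type.
Variable cmb : R -> X -> X -> X.
Definition cvx (K : X -> Prop) := forall y z t, K y -> K z -> 0 <= t <= 1 -> K (cmb t y z).
Definition aff (K : X -> Prop) (f : X -> R) := forall y z t, K y -> K z -> 0 <= t <= 1 ->
  f (cmb t y z) = t * f y + (1 - t) * f z.

Lemma bin (K : X -> Prop) f g : cvx K -> aff K f -> aff K g ->
  (forall y, K y -> f y <= 0 \/ g y <= 0) ->
  exists t, 0 <= t <= 1 /\ forall y, K y -> t * f y + (1 - t) * g y <= 0.
Proof.
  intros Hc Hf Hg H.
  destruct (classic (exists y, K y /\ f y > 0)) as [[y0 [Ky0 Hy0]]|Hn1].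
  2:{ exists 1. split; [lra|]. intros y Ky. destruct (Rle_dec (f y) 0). lra.
      exfalso; apply Hn1; exists y; split; auto; lra. }
  destruct (classic (exists z, K z /\ g z > 0)) as [[z0 [Kz0 Hz0]]|Hn2].
  2:{ exists 0. split; [lra|]. intros y Ky. destruct (Rle_dec (g y) 0). lra.
      exfalso; apply Hn2; exists y; split; auto; lra. }
  assert (D : forall y z, K y -> K z -> f y > 0 -> g z > 0 -> f y * g z <= f z * g y).
  { intros y z Ky Kz Fy Gz. destruct (Rle_dec (f y * g z) (f z * g y)) as [ok|nok]; [exact ok|exfalso].
    assert (gy : g y <= 0) by (destruct (H y Ky); lra).
    assert (fz : f z <= 0) by (destruct (H z Kz); lra).
    set (a := f y) in *. set (b := f z) in *. set (c := g y) in *. set (d := g z) in *.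
    assert (HP : a - b > 0) by lra. assert (HQ : d - c > 0) by lra.
    set (lo := - b / (a - b)). set (hi := d / (d - c)).
    assert (E1 : lo * (a - b) = - b) by (unfold lo; field; lra).
    assert (E2 : hi * (d - c) = d) by (unfold hi; field; lra).
    assert (E3 : (hi - lo) * ((a - b) * (d - c)) = a * d - b * c).
    { replace ((hi - lo) * ((a - b) * (d - c))) with (hi * (d - c) * (a - b) - lo * (a - b) * (d - c)) by ring.
      rewrite E1, E2. ring. }
    assert (PQ : (a - b) * (d - c) > 0) by (apply Rmult_gt_0_compat; lra).
    assert (Hlh : lo < hi) by nra.
    assert (Hlo : 0 <= lo) by nra.
    assert (Hhi : hi <= 1) by nra.
    set (al := (lo + hi) / 2).
    assert (Hal : 0 <= al <= 1) by (unfold al; lra).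
    pose (w := cmb al y z).
    assert (Kw : K w) by (apply Hc; auto).
    assert (Fw : f w = al * a + (1 - al) * b) by (apply Hf; auto).
    assert (Gw : g w = al * c + (1 - al) * d) by (apply Hg; auto).
    assert (f w > 0).
    { rewrite Fw. assert ((al - lo) * (a - b) > 0) by (apply Rmult_gt_0_compat; unfold al; lra). nra. }
    assert (g w > 0).
    { rewrite Gw. assert ((hi - al) * (d - c) > 0) by (apply Rmult_gt_0_compat; unfold al; lra). nra. }
    destruct (H w Kw); lra. }
  assert (Fneg : forall z, K z -> g z > 0 -> f z < 0).
  { intros z Kz Gz. destruct (H z Kz) as [h|h]; [|lra]. destruct (Rle_lt_or_eq_dec _ _ h); auto.
    specialize (D y0 z Ky0 Kz Hy0 Gz). rewrite e in D. nra. }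
  set (Sr := fun r => exists z, K z /\ g z > 0 /\ r = g z / (- f z)).
  assert (UB : forall y, K y -> f y > 0 -> is_upper_bound Sr (- g y / f y)).
  { intros y Ky Fy r [z [Kz [Gz ->]]]. specialize (D y z Ky Kz Fy Gz). specialize (Fneg z Kz Gz).
    set (u := g z / - f z). set (v := - g y / f y).
    assert (Eu : u * (- f z) = g z) by (unfold u; field; lra).
    assert (Ev : v * f y = - g y) by (unfold v; field; lra).
    assert ((v - u) * (f y * (- f z)) >= 0).
    { replace ((v - u) * (f y * (- f z))) with (v * f y * (- f z) - u * (- f z) * f y) by ring.
      rewrite Eu, Ev. nra. }
    assert (f y * (- f z) > 0) by (apply Rmult_gt_0_compat; lra). nra. }
  destruct (completeness Sr) as [a [Ha1 Ha2]].
  { exists (- g y0 / f y0). apply UB; auto. }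
  { exists (g z0 / - f z0). exists z0; auto. }
  assert (Ha0 : 0 <= a).
  { apply Rle_trans with (g z0 / - f z0). 2:{ apply Ha1; exists z0; auto. }
    specialize (Fneg z0 Kz0 Hz0). apply Rlt_le. apply Rdiv_lt_0_compat; lra. }
  exists (a / (1 + a)). split.
  { split. unfold Rdiv; apply Rmult_le_pos; [lra|left; apply Rinv_0_lt_compat; lra]. apply Rmult_le_reg_r with (1 + a); [lra|].
    unfold Rdiv; rewrite Rmult_assoc, Rinv_l; lra. }
  intros y Ky.
  assert (Key : a * f y + g y <= 0).
  { destruct (Rlt_dec 0 (f y)) as [Fy|Fy].
    - assert (a <= - g y / f y) by (apply Ha2, UB; auto).
      assert (Ev : (- g y / f y) * f y = - g y) by (field; lra).
      assert (a * f y <= (- g y / f y) * f y) by (apply Rmult_le_compat_r; lra). lra.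
    - destruct (Rlt_dec 0 (g y)) as [Gy|Gy].
      + specialize (Fneg y Ky Gy).
        assert (g y / - f y <= a) by (apply Ha1; exists y; auto).
        assert (Eu : (g y / - f y) * (- f y) = g y) by (field; lra).
        assert ((g y / - f y) * (- f y) <= a * (- f y)) by (apply Rmult_le_compat_r; lra). lra.
      + nra. }
  assert (Eq : a / (1 + a) * f y + (1 - a / (1 + a)) * g y = (a * f y + g y) * / (1 + a)) by (field; lra).
  rewrite Eq. assert (0 < / (1 + a)) by (apply Rinv_0_lt_compat; lra). nra.
Qed.

Definition wsumh {I} (h : I -> X -> R) (w : list (R * I)) (y : X) :=
  fold_right (fun p s => fst p * h (snd p) y + s) 0 w.

Lemma aff_wsumh {I} (K : X -> Prop) (h : I -> X -> R) w :
  (forall p, In p w -> aff K (h (snd p))) -> aff K (wsumh h w).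
Proof.
  induction w as [|p w IH]; intros Ha y z t Ky Kz Ht; simpl.
  - ring.
  - rewrite (Ha p (or_introl eq_refl) y z t Ky Kz Ht).
    rewrite IH; auto. ring. intros; apply Ha; right; auto.
Qed.

Lemma sumw_scale {I} (c : R) (w : list (R * I)) :
  sumw (map (fun p => (c * fst p, snd p)) w) = c * sumw w.
Proof. induction w; simpl; [ring|]. unfold sumw in *; simpl in *. rewrite IHw. ring. Qed.

Lemma wsumh_scale {I} (h : I -> X -> R) (c : R) w y :
  wsumh h (map (fun p => (c * fst p, snd p)) w) y = c * wsumh h w y.
Proof. induction w; simpl; [ring|]. rewrite IHw. ring. Qed.

Lemma mm {I} (h : I -> X -> R) : forall L, L <> [] -> forall K, cvx K ->
  (forall i, In i L -> aff K (h i)) -> (forall y, K y -> exists i, In i L /\ h i y <= 0) ->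
  exists w, map snd w = L /\ Forall (fun p => 0 <= fst p) w /\ sumw w = 1 /\
     forall y, K y -> wsumh h w y <= 0.
Proof.
  induction L as [|i L IH]; intros Hne K Kc Ha Hc; [congruence|].
  destruct (classic (L = [])) as [->|HL].
  - exists [(1, i)]. split; [reflexivity|split; [repeat constructor; simpl; lra|split]].
    + unfold sumw; simpl; ring.
    + intros y Ky. destruct (Hc y Ky) as [i' [[<-|[]] Hi]]. simpl. lra.
  - set (K' := fun y => K y /\ h i y > 0).
    assert (Kc' : cvx K').
    { intros y z t [Ky Hy] [Kz Hz] Ht; split; [apply Kc; auto|].
      rewrite (Ha i (or_introl eq_refl) y z t Ky Kz Ht).
      destruct (Rlt_dec 0 t). nra. assert (t = 0) by lra. subst t. lra. }
    destruct (IH HL K' Kc') as [w' [Hmap [Hnn [Hsum Hneg]]]].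
    { intros j Hj y z t [Ky _] [Kz _] Ht. apply Ha; auto. right; auto. }
    { intros y [Ky Hy]. destruct (Hc y Ky) as [i' [[<-|Hi'] Hi]]; [lra|eauto]. }
    assert (Ag : aff K (wsumh h w')).
    { apply aff_wsumh. intros p Hp. apply Ha. right. rewrite <- Hmap. apply in_map; auto. }
    destruct (bin K (h i) (wsumh h w') Kc (Ha i (or_introl eq_refl)) Ag) as [t [Ht Hb]].
    { intros y Ky. destruct (Rle_dec (h i y) 0); [left; auto|right; apply Hneg; split; auto; lra]. }
    exists ((t, i) :: map (fun p => ((1 - t) * fst p, snd p)) w'). split; [|split; [|split]].
    + simpl. f_equal. rewrite map_map. exact Hmap.
    + constructor; [simpl; lra|]. apply Forall_map. eapply Forall_impl; [|exact Hnn].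
      simpl; intros; apply Rmult_le_pos; lra.
    + unfold sumw; simpl. fold (sumw (map (fun p => ((1 - t) * fst p, snd p)) w')).
      rewrite sumw_scale, Hsum. ring.
    + intros y Ky. simpl. fold (wsumh h (map (fun p => ((1 - t) * fst p, snd p)) w') y).
      rewrite wsumh_scale. apply Hb; auto.
Qed.
End Minimax.

Lemma fold_INR (l : list nat) : 0 <= fold_right (fun n s => INR n + s) 0 l /\
  forall n, In n l -> INR n <= fold_right (fun n s => INR n + s) 0 l.
Proof.
  induction l as [|m l [IH1 IH2]]; simpl.
  - split; [lra|intros n []].
  - pose proof (pos_INR m). split; [lra|].
    intros n [<-|Hn]; [lra|]. specialize (IH2 n Hn). lra.
Qed.

Lemma rel_sum (Omega : Type) (A : (Omega -> Prop) -> Prop) lam e (nu : (Omega -> Prop) -> R) w :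
  wsumh ((Omega -> Prop) -> R) (fun B (nu : (Omega -> Prop) -> R) => nu B + tv A lam (compl B) - e) w nu =
  wsumE Omega nu (full Omega) w + wsumE Omega (tv A lam) (full Omega) (mapc Omega w) - e * sumw w.
Proof.
  induction w as [|[p B] w IH]; simpl; [ring|]. unfold sumw in *; simpl.
  unfold wsumh in *. simpl in *. rewrite IH, !inter_full. ring.
Qed.

Theorem mainTheorem3 (Omega : Type) (A : (Omega -> Prop) -> Prop)
  (HA : is_algebra A)
  (lam : (Omega -> Prop) -> R) (Hlam : is_ba A lam)
  (M : ((Omega -> Prop) -> R) -> Prop)
  (HMpos : forall mu, M mu -> is_ba_pos A mu)
  (HMconv : convex M)
  (HMcpt : weak_compact A M) :
  (forall mu, M mu -> perp A mu lam) <-> perp_u A lam M.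
Proof.
  destruct HMcpt as [HMba Hcov].
  assert (Tn : forall X, A X -> 0 <= tv A lam X) by (intros; eapply tv_nonneg; eauto).
  assert (Ts : forall X Y, A X -> A Y -> disj X Y -> tv A lam (union Omega X Y) <= tv A lam X + tv A lam Y)
    by (intros; eapply tv_sub; eauto).
  assert (Tp : forall X Y, A X -> A Y -> disj X Y -> tv A lam X + tv A lam Y <= tv A lam (union Omega X Y))
    by (intros; eapply tv_super; eauto).
  assert (Pn : forall mu, M mu -> forall X, A X -> 0 <= mu X) by (intros mu Hmu; apply (HMpos mu Hmu)).
  assert (Ps : forall mu, M mu -> forall X Y, A X -> A Y -> disj X Y -> mu (union Omega X Y) <= mu X + mu Y).
  { intros mu Hmu X Y HX HY Hd. rewrite (ba_add _ A mu (proj1 (HMpos mu Hmu))); auto; lra. }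
  assert (Pp : forall mu, M mu -> forall X Y, A X -> A Y -> disj X Y -> mu X + mu Y <= mu (union Omega X Y)).
  { intros mu Hmu X Y HX HY Hd. rewrite (ba_add _ A mu (proj1 (HMpos mu Hmu))); auto; lra. }
  assert (Hfull := A_full Omega A HA).
  assert (Hbd : exists b, forall nu, M nu -> nu (full Omega) <= b).
  { destruct (Hcov nat (fun n nu => nu (full Omega) < INR n)) as [l Hl].
    - intros n mu Hmu Hlt. exists [[(1, full Omega)]], (INR n - mu (full Omega)).
      split; [lra|split].
      + intros f [<-|[]] p [<-|[]]. simpl. exact Hfull.
      + intros nu Hnu Hf. specialize (Hf _ (or_introl eq_refl)). unfold integral in Hf; simpl in Hf.
        apply Rabs_def2 in Hf. lra.
    - intros mu Hmu. destruct (INR_archimed 1 (mu (full Omega)) ltac:(lra)) as [n Hn]. exists n. lra.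
    - exists (fold_right (fun n s => INR n + s) 0 l). intros nu Hnu. destruct (Hl nu Hnu) as [n [Hn Hlt]].
      pose proof (proj2 (fold_INR l) n Hn). lra. }
  destruct Hbd as [b Hb].
  assert (Hle : forall nu B, M nu -> A B -> tv A nu B <= b).
  { intros nu B Hnu HB. rewrite tv_pos; auto.
    assert (nu B <= nu (full Omega)).
    { eapply nu_mono; eauto. intros; exact I. }
    specialize (Hb nu Hnu). lra. }
  split.
  2:{ intros Hu mu Hmu eps Heps. destruct (Hu eps Heps) as [B [HB Hlt]]. exists B; split; auto.
      assert (tv A mu B <= Rsup (fun r => exists mu, M mu /\ r = tv A mu B)).
      { apply Rsup_ge; [exists mu; auto|]. exists b. intros r [nu [Hnu ->]]. apply Hle; auto. }
      pose proof (Tn (compl B) (A_compl _ _ HA _ HB)). lra. }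
  intros Hp eps Heps.
  destruct (classic (exists nu, M nu)) as [[nu0 Hnu0]|Hemp].
  2:{ exists (full Omega). split; auto.
      assert (Rsup (fun r => exists mu, M mu /\ r = tv A mu (full Omega)) <= 0).
      { apply Rsup_le; [|lra]. intros r [mu [Hmu _]]. exfalso; apply Hemp; eauto. }
      replace (compl (full Omega)) with (empty Omega).
      - rewrite (nu_empty _ A HA (tv A lam) Tn Tp). lra.
      - apply sext; unfold compl, full, empty; tauto. }
  set (e := eps / 4). assert (He : 0 < e) by (unfold e; lra).
  destruct (Hcov {B : Omega -> Prop | A B}
     (fun i nu => nu (proj1_sig i) + tv A lam (compl (proj1_sig i)) < e)) as [l Hl].
  - intros [B HB] mu Hmu Hlt. simpl in *. exists [[(1, B)]], (e - (mu B + tv A lam (compl B))).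
    split; [lra|split].
    + intros f [<-|[]] p [<-|[]]. simpl. exact HB.
    + intros nu Hnu Hf. specialize (Hf _ (or_introl eq_refl)). unfold integral in Hf; simpl in Hf.
      apply Rabs_def2 in Hf. lra.
  - intros mu Hmu. destruct (Hp mu Hmu e He) as [B [HB Hlt]]. exists (exist _ B HB). simpl.
    rewrite tv_pos in Hlt; auto.
  - set (L := map (@proj1_sig _ _) l).
    destruct (mm ((Omega -> Prop) -> R) (fun t mu nu => fun B => t * mu B + (1 - t) * nu B)
                 (fun B (nu : (Omega -> Prop) -> R) => nu B + tv A lam (compl B) - e) L) with (K := M)
      as [w [Hmap [Hnn [Hsum Hneg]]]].
    + intros HL. destruct (Hl nu0 Hnu0) as [i [Hi _]].
      apply (in_map (@proj1_sig _ _)) in Hi. fold L in Hi. rewrite HL in Hi. destruct Hi.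
    + intros y z t Hy Hz Ht. apply HMconv; auto.
    + intros i Hi y z t _ _ _. cbv beta. ring.
    + intros nu Hnu. destruct (Hl nu Hnu) as [i [Hi Hlt]]. exists (proj1_sig i).
      split; [apply in_map; auto|lra].
    + assert (HF : Forall (fun pB => 0 <= fst pB /\ A (snd pB)) w).
      { rewrite Forall_forall; intros pB HpB; split.
        - rewrite Forall_forall in Hnn; auto.
        - assert (HI : In (snd pB) L) by (rewrite <- Hmap; apply in_map; auto).
          unfold L in HI; apply in_map_iff in HI. destruct HI as [[B HB] [<- _]]. exact HB. }
      assert (HFc : Forall (fun pB => 0 <= fst pB /\ A (snd pB)) (mapc Omega w)).
      { unfold mapc. apply Forall_map. eapply Forall_impl; [|exact HF]. simpl.
        intros a [h1 h2]; split; auto; apply A_compl; auto. }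
      set (D := Sth Omega (1/2) w).
      assert (HD : A D) by (apply (Sth_A Omega A HA); eapply Forall_impl; [|exact HF]; simpl; tauto).
      assert (HDc : A (compl D)) by (apply A_compl; auto).
      set (Dc := Sth Omega (1/2) (mapc Omega w)).
      assert (HDc' : A Dc) by (apply (Sth_A Omega A HA); eapply Forall_impl; [|exact HFc]; simpl; tauto).
      assert (C1 : tv A lam (compl D) <= tv A lam Dc).
      { eapply nu_mono; eauto. intros x Hx. unfold Dc.
        replace (1/2) with (sumw w - 1/2) by (rewrite Hsum; field).
        apply Sth_compl. exact Hx. }
      assert (C2 : 1/2 * tv A lam Dc <= wsumE Omega (tv A lam) (full Omega) (mapc Omega w)).
      { pose proof (claim Omega A HA (tv A lam) Tn Ts Tp (mapc Omega w) HFc (1/2) (full Omega) ltac:(lra) Hfull) as H.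
        rewrite inter_full in H. exact H. }
      assert (Key : forall nu, M nu -> nu D + tv A lam (compl D) <= 2 * e).
      { intros nu Hnu.
        pose proof (claim Omega A HA nu (Pn nu Hnu) (Ps nu Hnu) (Pp nu Hnu) w HF (1/2) (full Omega) ltac:(lra) Hfull) as H.
        rewrite inter_full in H. fold D in H.
        pose proof (Hneg nu Hnu) as H2. unfold wsumh in H2.
        pose proof (rel_sum Omega A lam e nu w) as H3. unfold wsumh in H3. rewrite H3, Hsum in H2.
        lra. }
      exists D. split; auto.
      assert (Hpos : 0 <= 2 * e - tv A lam (compl D)).
      { pose proof (Key nu0 Hnu0). pose proof (Pn nu0 Hnu0 D HD). lra. }
      assert (Rsup (fun r => exists mu, M mu /\ r = tv A mu D) <= 2 * e - tv A lam (compl D)).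
      { apply Rsup_le; auto. intros r [nu [Hnu ->]]. rewrite tv_pos; auto.
        pose proof (Key nu Hnu). lra. }
      unfold e in *. lra.
Qed.
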